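(* Let $q>1$, let $\mathbb{X}$ be a Banach space, let $f:\overline{q^{\mathbb{Z}}}\times\mathbb{X}\to\mathbb{X}$ be almost automorphic in $t$ for each $x\in\mathbb{X}$, and suppose $f$ is Lipschitz in $x$ uniformly in $t$, i.e. there is $L>0$ with $\|f(t,x)-f(t,y)\|\le L\|x-y\|$ for all $x,y\in\mathbb{X}$, $t\in\overline{q^{\mathbb{Z}}}$. Let $\varphi:\overline{q^{\mathbb{Z}}}\to\mathbb{X}$ be almost automorphic. Then $F:\overline{q^{\mathbb{Z}}}\to\mathbb{X}$, $F(t)=f(t,\varphi(t))$, is almost automorphic.
   Context: $\overline{q^{\mathbb{Z}}}=\{q^n:n\in\mathbb{Z}\}\cup\{0\}$ with $q>1$; a function on it is continuous iff $\lim_{n\to-\infty}f(q^n)=f(0)$. Definition 1: a continuous function $h:\overline{q^{\mathbb{Z}}}\to\mathbb{X}$ is almost automorphic if for every sequence of integers $(s_n')$ there exists a subsequence $(s_n)$ such that $k(t):=\lim_{n\to\infty}h(tq^{s_n})$ exists for each $t\in\overline{q^{\mathbb{Z}}}$ and $\lim_{n\to\infty}k(tq^{-s_n})=h(t)$ for each $t$. Definition 2: a continuous function $f:\overline{q^{\mathbb{Z}}}\times\mathbb{X}\to\mathbb{X}$ is almost automorphic in $t$ for each $x\in\mathbb{X}$ if for every sequence of integers $(s_n')$ there exists a subsequence $(s_n)$ such that $g(t,x):=\lim_{n\to\infty}f(tq^{s_n},x)$ exists for each $t\in\overline{q^{\mathbb{Z}}}$, $x\in\mathbb{X}$, and $\lim_{n\to\infty}g(tq^{-s_n},x)=f(t,x)$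 for each $t\in\overline{q^{\mathbb{Z}}}$, $x\in\mathbb{X}$. *)

(* Defs.v *)
From HB Require Import structures.
From mathcomp Require Import all_boot all_order all_algebra.
From mathcomp Require Import all_classical all_reals all_analysis.
Set Implicit Arguments. Unset Strict Implicit. Unset Printing Implicit Defensive.
Import Order.TTheory GRing.Theory Num.Theory.
Import numFieldNormedType.Exports.
Local Open Scope classical_set_scope.
Local Open Scope ring_scope.

Definition qZbar {R : realType} (q : R) : set R :=
  [set t | t = 0 \/ exists n : int, t = q ^ n].

Definition subseq_of (s s' : nat -> int) : Prop :=
  exists phi : nat -> nat,
    {homo phi : m n / (m < n)%N >-> (m < n)%N} /\ forall n, s n = s' (phi n).

Definition almost_automorphic {R : realType} {X : normedModType R}
  (q : R) (h : R -> X) : Prop :=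
  {within qZbar q, continuous h} /\
  forall s' : nat -> int, exists s : nat -> int, subseq_of s s' /\
    exists k : R -> X,
      (forall t, qZbar q t -> (fun n => h (t * q ^ (s n))) @ \oo --> k t) /\
      (forall t, qZbar q t -> (fun n => k (t * q ^ (- s n))) @ \oo --> h t).

Definition almost_automorphic_t {R : realType} {X : normedModType R}
  (q : R) (f : R -> X -> X) : Prop :=
  {within qZbar q `*` [set: X], continuous (fun p : R * X => f p.1 p.2)} /\
  forall s' : nat -> int, exists s : nat -> int, subseq_of s s' /\
    exists g : R -> X -> X,
      (forall t x, qZbar q t -> (fun n => f (t * q ^ (s n)) x) @ \oo --> g t x) /\
      (forall t x, qZbar q t -> (fun n => g (t * q ^ (- s n)) x) @ \oo --> f t x).

(* Main.v *)
Require Import Defs.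
From HB Require Import structures.
From mathcomp Require Import all_boot all_order all_algebra.
From mathcomp Require Import all_classical all_reals all_analysis.
From mathcomp Require Import ring lra.
Import Order.TTheory GRing.Theory Num.Theory.
Import numFieldNormedType.Exports.
Local Open Scope classical_set_scope.
Local Open Scope ring_scope.
Lemma homo_geq (psi : nat -> nat) :
  {homo psi : m n / (m < n)%N >-> (m < n)%N} -> forall n, (n <= psi n)%N.
Proof.
move=> h; elim=> // n IH; apply: leq_ltn_trans IH (h _ _ _); exact: ltnSn.
Qed.

Lemma sub_cvg {R : realType} {X : normedModType R} (u : nat -> X) (l : X) (psi : nat -> nat) :
  {homo psi : m n / (m < n)%N >-> (m < n)%N} -> u @ \oo --> l -> (fun n => u (psi n)) @ \oo --> l.
Proof.
move=> hpsi hu.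
have hp : psi @ \oo --> \oo.
  move=> P [N _ HN]; exists N => // n /= hn; apply: HN => /=.
  apply: (leq_trans hn); exact: homo_geq.
by move=> P /hu /hp.
Qed.

Lemma qZ_mul {R : realType} (q : R) (hq : 1 < q) t (k : int) :
  qZbar q t -> qZbar q (t * q ^ k).
Proof.
case=> [->|[m ->]]; [by left; rewrite mul0r|right; exists (m + k)].
rewrite exprzDr //; rewrite unitfE; apply: lt0r_neq0; exact: lt_trans ltr01 hq.
Qed.
Lemma lip_cvg {R : realType} {X : normedModType R} {T} (F : set_system T) {FF : Filter F}
  (G : T -> X -> X) (A : T -> X) (c a : X) (L : R) : 0 < L ->
  (\forall n \near F, forall x y, `|G n x - G n y| <= L * `|x - y|) ->
  (fun n => G n c) @ F --> a -> A @ F --> c -> (fun n => G n (A n)) @ F --> a.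
Proof.
move=> L0 hL /cvgrPdist_lt hG /cvgrPdist_lt hA; apply/cvgrPdist_lt => e e0.
have e2 : 0 < e / 2 by rewrite divr_gt0.
have eL : 0 < e / (2 * L) by rewrite divr_gt0 // mulr_gt0.
have hG2 := hG _ e2; have hA2 := hA _ eL.
near=> n.
have h1 : `|a - G n c| < e / 2 by near: n.
have h2 : `|c - A n| < e / (2 * L) by near: n.
have h3 : forall x y, `|G n x - G n y| <= L * `|x - y| by near: n.
apply: (le_lt_trans (ler_distD (G n c) _ _)).
have h4 : `|G n c - G n (A n)| < e / 2.
  apply: (le_lt_trans (h3 _ _)).
  have -> : e / 2 = L * (e / (2 * L)).
    by field; rewrite gt_eqF.
  by rewrite ltr_pM2l.
by rewrite [e]splitr ltrD.
Unshelve. all: end_near.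
Qed.

Lemma lim_lip {R : realType} {X : normedModType R}
  (G : nat -> X -> X) (x y a b : X) (L : R) :
  (forall n, `|G n x - G n y| <= L * `|x - y|) ->
  (fun n => G n x) @ \oo --> a -> (fun n => G n y) @ \oo --> b ->
  `|a - b| <= L * `|x - y|.
Proof.
move=> hL /cvgrPdist_lt hx /cvgrPdist_lt hy; apply/ler_addgt0Pr => e e0.
have e2 : 0 < e / 2 by rewrite divr_gt0.
have hx2 := hx _ e2; have hy2 := hy _ e2.
near \oo => n.
have h1 : `|a - G n x| < e / 2 by near: n.
have h2 : `|b - G n y| < e / 2 by near: n.
apply: (le_trans (ler_distD (G n x) _ _)).
have h3 := ler_distD (G n y) (G n x) b.
have h4 := hL n.
rewrite distrC in h2.
lra.
Unshelve. all: end_near.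
Qed.

Lemma sub_cvg' {R : realType} {X : normedModType R} (u v : nat -> X) (l : X) (psi : nat -> nat) :
  {homo psi : m n / (m < n)%N >-> (m < n)%N} -> (forall n, v n = u (psi n)) ->
  u @ \oo --> l -> v @ \oo --> l.
Proof.
move=> hpsi hv hu; have -> : v = (fun n => u (psi n)) by apply: funext.
exact: sub_cvg.
Qed.

Lemma subseq_trans (s2 s1 s' : nat -> int) :
  subseq_of s2 s1 -> subseq_of s1 s' -> subseq_of s2 s'.
Proof.
move=> [p2 [h2 e2]] [p1 [h1 e1]]; exists (fun n => p1 (p2 n)); split.
  by move=> m n mn; apply: h1; apply: h2.
by move=> n; rewrite e2 e1.
Qed.

Theorem theorem3p10 (R : realType) (X : completeNormedModType R) (q : R)
  (hq : 1 < q) (f : R -> X -> X) (phi : R -> X) :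
  almost_automorphic_t q f ->
  (exists L : R, 0 < L /\
     forall t (x y : X), qZbar q t -> `|f t x - f t y| <= L * `|x - y|) ->
  almost_automorphic q phi ->
  almost_automorphic q (fun t => f t (phi t)).
Proof.
move=> [fc faa] [L [L0 Lip]] [pc paa]; split.
  apply/subspace_continuousP => x qx.
  move/subspace_continuousP: pc => pc.
  move/subspace_continuousP: fc => fc.
  have hfx := fc (x, phi x) (conj qx I).
  apply: (@lip_cvg R X _ _ _ f phi (phi x) _ L L0).
  - have hw : within (qZbar q) (nbhs x) (qZbar q) by apply: withinT.
    by apply: filterS hw => t qt x1 y1; apply: Lip.
  - have hpair : (fun t => (t, phi x)) @ within (qZbar q) (nbhs x) -->
        within (qZbar q `*` [set: X]) (nbhs (x, phi x)).
      move=> P; rewrite /within => -[[U V] [/= Ux Vc] UV].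
      apply: filterS Ux => t Ut qt; apply: (UV (t, phi x)); last by split.
      by split => //; exact: nbhs_singleton Vc.
    by move=> P /hfx /hpair.
  - exact: pc.
move=> s'.
have [s1 [sub1 [k [k1 k2]]]] := paa s'.
have [s2 [sub2 [g [g1 g2]]]] := faa s1.
exists s2; split; first exact: subseq_trans sub2 sub1.
have [psi [hpsi es2]] := sub2.
have qpsi : forall t n, qZbar q t -> qZbar q (t * q ^ s2 n).
  by move=> t n qt; apply: qZ_mul.
have qmsi : forall t n, qZbar q t -> qZbar q (t * q ^ (- s2 n)).
  by move=> t n qt; apply: qZ_mul.
have glip : forall t x y, qZbar q t -> `|g t x - g t y| <= L * `|x - y|.
  move=> t x y qt; apply: (@lim_lip R X (fun n => f (t * q ^ s2 n)) x y _ _ L _ (g1 t x qt) (g1 t y qt)).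
  by move=> n; apply: Lip; apply: qpsi.
exists (fun t => g t (k t)); split => t qt.
- apply: (@lip_cvg R X _ _ _ (fun n => f (t * q ^ s2 n)) (fun n => phi (t * q ^ s2 n)) (k t) _ L L0).
  + by apply: filterE => n x1 y1; apply: Lip; apply: qpsi.
  + exact: g1.
  + apply: (@sub_cvg' R X _ _ _ psi hpsi _ (k1 t qt)) => n /=; by rewrite es2.
- apply: (@lip_cvg R X _ _ _ (fun n => g (t * q ^ (- s2 n))) (fun n => k (t * q ^ (- s2 n))) (phi t) _ L L0).
  + by apply: filterE => n x1 y1; apply: glip; apply: qmsi.
  + exact: g2.
  + apply: (@sub_cvg' R X _ _ _ psi hpsi _ (k2 t qt)) => n /=; by rewrite es2.
Qed.
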